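(* Let $n\ge 3$, let $a<b<c$ be elements of $\mathcal{C}_n$ and let $k$ be an integer with $a+1\le k\le b$. Then the semiring $\mathcal{L}^{k}_{a}\left(\triangle^{(n)}\{a,b,c\}\right)=\{a_kb_{n-k-i}c_i:\ 0\le i\le n-k\}$ is isomorphic to the string $\mathcal{STR}^{(n-k)}\{b-k,c-k\}$.
   Context: For $N\ge1$, $\mathcal{C}_N=\{0,1,\dots,N-1\}$ with its usual order; $\widehat{\mathcal{E}}_{\mathcal{C}_N}$ is the set of all order-preserving maps $\mathcal{C}_N\to\mathcal{C}_N$ (not required to fix $0$), a semiring with $(\alpha+\beta)(x)=\max(\alpha(x),\beta(x))$ and $(\alpha\cdot\beta)(x)=\beta(\alpha(x))$. The notation $a_kb_\ell c_m$ (with $k+\ell+m=N$) denotes the map sending $0,\dots,k-1$ to $a$, the next $\ell$ elements to $b$ and the last $m$ to $c$. The triangle $\triangle^{(n)}\{a,b,c\}$ is the set of $\alpha\in\widehat{\mathcal{E}}_{\mathcal{C}_n}$ with image in $\{a,b,c\}$; its layer $\mathcal{L}^{k}_{a}$ is the set of elements mapping exactly $k$ elements to $a$ (a subsemiring for $a+1\le k\le b$). For $x<y$ in $\mathcal{C}_N$, the string $\mathcal{STR}^{(N)}\{x,y\}$ is the subsemiring of $\widehat{\mathcal{E}}_{\mathcal{C}_N}$ of maps with image in $\{x,y\}$. Isomorphism means semiring isomorphism (bijection preserving $+$ and $\cdot$). *)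

(* Defs.v *)
From mathcomp Require Import all_boot all_order.
Set Implicit Arguments. Unset Strict Implicit. Unset Printing Implicit Defensive.

(* Maps C_N -> C_N, with C_N = 'I_N = {0,...,N-1}. *)
Definition emap (N : nat) := {ffun 'I_N -> 'I_N}.

Definition ordpres N (f : emap N) : bool :=
  [forall x : 'I_N, forall y : 'I_N, (x <= y)%N ==> (f x <= f y)%N].

Definition eplus N (f g : emap N) : emap N :=
  [ffun x => if (f x <= g x)%N then g x else f x].

Definition emul N (f g : emap N) : emap N := [ffun x => g (f x)].

Definition triangle n (a b c : 'I_n) (f : emap n) : bool :=
  ordpres f && [forall x, [|| f x == a, f x == b | f x == c]].

Definition layer n (a b c : 'I_n) (k : nat) (f : emap n) : bool :=
  triangle a b c f && (#|[set x | f x == a]| == k).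

Definition str (N : nat) (x y : nat) (f : emap N) : bool :=
  ordpres f && [forall z, (val (f z) == x) || (val (f z) == y)].

Definition seg3 n (a b c : 'I_n) (k l : nat) : emap n :=
  [ffun x : 'I_n => if (x < k)%N then a else if (x < k + l)%N then b else c].

Definition semiring_iso N M (P : emap N -> bool) (Q : emap M -> bool) : Prop :=
  exists phi : emap N -> emap M,
    [/\ (forall f, P f -> Q (phi f)),
        (forall f g, P f -> P g -> phi f = phi g -> f = g),
        (forall h, Q h -> exists2 f, P f & phi f = h),
        (forall f g, P f -> P g -> phi (eplus f g) = eplus (phi f) (phi g)) &
        (forall f g, P f -> P g -> phi (emul f g) = emul (phi f) (phi g))].

(* Main.v *)
Require Import Defs.
From mathcomp Require Import all_boot all_order.
From mathcomp Require Import zify.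

Lemma cardlt n m : (m <= n)%N -> #|[set y : 'I_n | (y < m)%N]| = m.
Proof.
move=> H. have ->: [set y : 'I_n | (y < m)%N] = (widen_ord H) @: [set: 'I_m].
  apply/setP => y; rewrite inE; apply/idP/imsetP.
  - by move=> Hy; exists (Ordinal Hy); rewrite ?inE //; apply val_inj.
  - by case=> z _ ->; rewrite /= ltn_ord.
by rewrite card_imset ?cardsT ?card_ord //; by move=> u v /(congr1 val) /= E; apply: val_inj.
Qed.

Lemma dc n (D : {set 'I_n}) :
  (forall x y : 'I_n, (y <= x)%N -> x \in D -> y \in D) ->
  forall x : 'I_n, (x \in D) = (x < #|D|)%N.
Proof.
move=> HD x. apply/idP/idP.
- move=> Hx. have: [set y : 'I_n | (y < x.+1)%N] \subset D.
    by apply/subsetP => y; rewrite inE ltnS => Hy; exact: HD Hx.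
  by move/subset_leq_card; rewrite cardlt.
- move=> Hlt; apply/negPn/negP => Hx.
  have: D \subset [set y : 'I_n | (y < x)%N].
    apply/subsetP => y Hy; rewrite inE ltnNge; apply/negP => Hxy; by rewrite (HD _ _ Hxy Hy) in Hx.
  by move/subset_leq_card; rewrite cardlt ?(ltnW (ltn_ord x)) // leqNgt Hlt.
Qed.

Lemma ordpresP N (f : emap N) : ordpres f -> forall x y : 'I_N, (x <= y)%N -> (f x <= f y)%N.
Proof. by move=> /forallP H x y; move: (H x) => /forallP /(_ y) /implyP. Qed.

Ltac cases := repeat match goal with
  | |- context [if ?c then _ else _] =>
      lazymatch c with context [if _ then _ else _] => fail | _ => case: (boolP c) => ? end
  end.

Section S.
Variables (n : nat) (a b c : 'I_n) (k : nat).
Hypotheses (Hab : (a < b)%N) (Hbc : (b < c)%N) (Hk : (k <= b)%N).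

Lemma seg3_layer l : (l <= n - k)%N -> layer a b c k (seg3 a b c k l).
Proof.
move=> Hl. have Hcn := ltn_ord c.
apply/andP; split; [apply/andP; split|].
- apply/forallP => x; apply/forallP => y; apply/implyP => Hxy.
  rewrite !ffunE; cases => //=; lia.
- by apply/forallP => x; rewrite ffunE; cases; rewrite eqxx ?orbT.
- have ->: [set x | seg3 a b c k l x == a] = [set y : 'I_n | (y < k)%N].
    apply/setP => x; rewrite !inE ffunE; cases; rewrite ?eqxx //.
    + by apply/eqP => E; move: Hab; rewrite E ltnn.
    + by apply/eqP => E; move: Hab Hbc; rewrite E; lia.
  by rewrite cardlt //; lia.
Qed.

Lemma layer_seg3 f : layer a b c k f -> exists2 l, (l <= n - k)%N & f = seg3 a b c k l.
Proof.
case/andP => /andP [Hop /forallP Hv] /eqP Hc.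
have Hle := @ordpresP _ _ Hop.
have val3 x : [\/ f x = a, f x = b | f x = c].
  by case/or3P: (Hv x) => /eqP; [constructor 1|constructor 2|constructor 3].
set S := [set x | f x == a].
set T := [set x | f x != c].
have dS : forall x y : 'I_n, (y <= x)%N -> x \in S -> y \in S.
  move=> x y Hyx; rewrite !inE => /eqP Ex; have := Hle _ _ Hyx; rewrite Ex.
  by case: (val3 y) => ->; rewrite ?eqxx //; lia.
have dT : forall x y : 'I_n, (y <= x)%N -> x \in T -> y \in T.
  move=> x y Hyx; rewrite !inE => Ex; have := Hle _ _ Hyx.
  case: (val3 x) => E; rewrite E ?eqxx // in Ex *;
  case: (val3 y) => ->; rewrite ?eqxx //; try lia;
  move=> _; apply/eqP => E'; move: Hab Hbc; rewrite ?E'; lia.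
have HS := @dc _ _ dS; have HT := @dc _ _ dT.
have kj : (k <= #|T|)%N.
  rewrite -Hc; apply: subset_leq_card; apply/subsetP => x; rewrite !inE => /eqP ->.
  by apply/eqP => E; move: Hab Hbc; rewrite E; lia.
have jn : (#|T| <= n)%N by have := max_card T; rewrite card_ord.
exists (#|T| - k); first lia.
apply/ffunP => x; rewrite ffunE.
case: ifP => H1.
  by have := HS x; rewrite Hc H1 inE => /eqP.
case: ifP => H2.
  have := HT x; have := HS x; rewrite Hc H1 !inE.
  have -> : (x < #|T|)%N by lia.
  by case: (val3 x) => ->; rewrite ?eqxx.
have := HT x; rewrite !inE.
have -> : (x < #|T|)%N = false by lia.
by case: (val3 x) => ->; rewrite ?eqxx //; move/eqP.
Qed.

End S.

Theorem proposition28 (n : nat) (a b c : 'I_n) (k : nat) :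
  (3 <= n)%N -> (a < b)%N -> (b < c)%N -> (a + 1 <= k)%N -> (k <= b)%N ->
  (forall f : emap n,
     layer a b c k f <-> exists2 i, (i <= n - k)%N & f = seg3 a b c k (n - k - i))
  /\ semiring_iso (layer a b c k) (@str (n - k) (b - k) (c - k)).
Proof.
move=> H3 Hab Hbc Hak Hk.
have P1 : forall f : emap n,
     layer a b c k f <-> exists2 i, (i <= n - k)%N & f = seg3 a b c k (n - k - i).
  move=> f; split.
  - case/(@layer_seg3 _ _ _ _ _ Hab Hbc Hk) => l Hl ->; exists (n - k - l); first lia.
    by congr seg3; lia.
  - by case=> i Hi ->; apply: (@seg3_layer _ _ _ _ _ Hab Hbc Hk); lia.
split => //.
have Hcn := ltn_ord c.
pose phi (f : emap n) : emap (n - k) :=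
  [ffun y : 'I_(n - k) => insubd y (val (f (insubd a (val y + k))) - k)].
have phiE l (y : 'I_(n - k)) : (l <= n - k)%N ->
  val (phi (seg3 a b c k l) y) = if (y < l)%N then b - k else c - k.
  move=> Hl; have := ltn_ord y; rewrite !ffunE /= !val_insubd /=.
  cases => //=; lia.
have L f : layer a b c k f -> exists2 l, (l <= n - k)%N & f = seg3 a b c k l.
  exact: (@layer_seg3 _ _ _ _ _ Hab Hbc Hk f).
exists phi; split.
- move=> f /L [l Hl ->]; apply/andP; split.
  + apply/forallP => x; apply/forallP => y; apply/implyP => Hxy.
    rewrite !phiE //; cases => //; lia.
  + by apply/forallP => x; rewrite phiE //; cases; rewrite eqxx ?orbT.
- move=> f g /L [l1 H1 ->] /L [l2 H2 ->] E.
  suff -> : l1 = l2 by [].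
  apply/eqP; rewrite eqn_leq; apply/andP; split; rewrite leqNgt; apply/negP => Hlt.
  + have Hy : (l2 < n - k)%N by lia.
    have := congr1 (fun h : emap (n - k) => val (h (Ordinal Hy))) E => /=.
    rewrite !phiE //= Hlt ltnn; lia.
  + have Hy : (l1 < n - k)%N by lia.
    have := congr1 (fun h : emap (n - k) => val (h (Ordinal Hy))) E => /=.
    rewrite !phiE //= Hlt ltnn; lia.
- move=> h /andP [Hop /forallP Hv].
  have Hle := @ordpresP _ _ Hop.
  set D := [set y | val (h y) == b - k].
  have dD : forall x y : 'I_(n - k), (y <= x)%N -> x \in D -> y \in D.
    move=> x y Hyx; rewrite !inE => /eqP Ex; have Hh := Hle _ _ Hyx.
    case/orP: (Hv y) => /eqP E'; rewrite E' ?eqxx //.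
    move: Ex E' Hh => /= Ex E' Hh; lia.
  have HD := @dc _ _ dD.
  have jn : (#|D| <= n - k)%N by have := max_card D; rewrite card_ord.
  exists (seg3 a b c k #|D|); first by apply: (@seg3_layer _ _ _ _ _ Hab Hbc Hk).
  apply/ffunP => y; apply: val_inj; rewrite phiE // -HD inE.
  by case/orP: (Hv y) => /eqP ->; rewrite ?eqxx //; case: eqP => //; lia.
- move=> f g /L [l1 H1 ->] /L [l2 H2 ->].
  apply/ffunP => y; apply: val_inj; have := ltn_ord y.
  rewrite !ffunE /= !val_insubd /=; do 3 (cases => //=; rewrite ?val_insubd /=); first [lia | exfalso; lia].
- move=> f g /L [l1 H1 ->] /L [l2 H2 ->].
  apply/ffunP => y; apply: val_inj; have := ltn_ord y.
  rewrite !ffunE /= !val_insubd /=; do 3 (cases => //=; rewrite ?val_insubd /=); first [lia | exfalso; lia].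
Qed.
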